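(* For every $d\ge1$, $$\frac{\sqrt2^{\,d}}{(d+1)!\,d}\le H_{1,d}\le\frac{2^{d+1}}{(d+1)!}.$$
   Context: For integers $i,d\ge -1$ define $f_{-1,-1}=1$, $f_{-1,d}=0$ for $d\ge0$, $f_{i,-1}=0$ for $i\ge0$, and $f_{i,d}=(i+1)!\,S(d+1,i+1)$ for $i,d\ge0$, where $S(\cdot,\cdot)$ is the Stirling number of the second kind. For $d\ge0$ define rational numbers $F_{i,d}$, $-1\le i\le d$, by $F_{d,d}=1$ and recursively for $-1\le i\le d-1$, $F_{i,d}=\frac{1}{(d+1)!-(i+1)!}\sum_{j=i+1}^{d}f_{i,j}F_{j,d}$. Let $F_d(z)=\sum_{i=-1}^dF_{i,d}z^{d-i}$, and define the $H$-polynomial $H_d(z)=F_d(z-1)=\sum_{i=0}^{d+1}H_{i,d}z^{d+1-i}$, which defines the numbers $H_{i,d}$ (in particular $H_{1,d}=F_{0,d}$). *)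

(* Defs.v *)
From HB Require Import structures.
From mathcomp Require Import all_boot all_order all_algebra.
Set Implicit Arguments. Unset Strict Implicit. Unset Printing Implicit Defensive.
Import Order.TTheory GRing.Theory Num.Theory.
Local Open Scope ring_scope.

Fixpoint stirling2 (n k : nat) : nat :=
  match n, k with
  | 0, 0 => 1
  | 0, _.+1 => 0
  | _.+1, 0 => 0
  | n'.+1, k'.+1 => (k'.+1 * stirling2 n' k'.+1 + stirling2 n' k')%N
  end.

(* Shifted indices: fsh a b = f_{a-1,b-1} (a = i+1, b = d+1). *)
Definition fsh (a b : nat) : nat :=
  match a, b with
  | 0, 0 => 1
  | 0, _.+1 => 0
  | _.+1, 0 => 0
  | a'.+1, b'.+1 => (a'.+1`! * stirling2 b'.+1 a'.+1)%N
  end.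

(* Fseq d m = [:: F_{d-m-1+... } ] : the sequence
   [:: Fsh (d+1-m) d; ...; Fsh (d+1) d] (length m+1),
   where Fsh a d = F_{a-1,d}, computed by the downward recursion
   F_{i,d} = 1/((d+1)! - (i+1)!) * sum_{j=i+1}^d f_{i,j} F_{j,d}. *)
Fixpoint Fseq (d m : nat) : seq rat :=
  match m with
  | 0 => [:: 1]
  | m'.+1 =>
      let s := Fseq d m' in
      let a := (d - m')%N in
      ((d.+1)`!%:R - (a`!)%:R)^-1 *
        (\sum_(t < size s) (fsh a (a + 1 + t))%:R * s`_t) :: s
  end.

(* Fsh a d = F_{a-1,d}, for 0 <= a <= d+1. *)
Definition Fsh (a d : nat) : rat := (Fseq d d.+1)`_a.

Definition Fpoly (d : nat) : {poly rat} :=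
  \sum_(a < d.+2) Fsh a d *: 'X^(d.+1 - a).

Definition Hpoly (d : nat) : {poly rat} := Fpoly d \Po ('X - 1).

Definition Hcoef (i d : nat) : rat := (Hpoly d)`_(d.+1 - i).

(* Main.v *)
Require Import Defs.
From HB Require Import structures.
From mathcomp Require Import all_boot all_order all_algebra.
From mathcomp Require Import zify ring lra.
Import Order.TTheory GRing.Theory Num.Theory.

Lemma st_gt n k : (n < k)%N -> stirling2 n k = 0%N.
Proof.
elim: n k => [|n IH] [|k] //= lt.
by rewrite (IH _ lt) (IH _ (ltnW lt)) muln0.
Qed.

Lemma st_1 n : stirling2 n.+1 1 = 1%N.
Proof. by elim: n => //= n; rewrite mul1n addn0 => ->. Qed.

Lemma st_diag n : stirling2 n n = 1%N.
Proof. by elim: n => // n IH; rewrite /= IH st_gt // muln0. Qed.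

Lemma st_ub n k : (stirling2 n k <= 'C(n, k) * k ^ (n - k))%N.
Proof.
elim: n k => [|n IH] [|k] //=.
rewrite binS mulnDl subSS.
case: (ltnP n k.+1) => nk.
  rewrite (bin_small nk) mul0n add0n st_gt // muln0 add0n.
  apply: leq_trans (IH k) _; rewrite leq_mul2l.
  case: (n - k)%N => [|e]; first by rewrite !expn0 orbT.
  by rewrite leq_exp2r ?leqnSn ?orbT.
apply: leq_add; last first.
  apply: leq_trans (IH k) _; rewrite leq_mul2l.
  case: (n - k)%N => [|e]; first by rewrite !expn0 orbT.
  by rewrite leq_exp2r ?leqnSn ?orbT.
have -> : (n - k = (n - k.+1).+1)%N by rewrite subnSK.
rewrite expnS mulnCA leq_mul2l; apply/orP; right.
by apply: leq_trans (IH k.+1) _; rewrite mulnC.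
Qed.

Lemma fact_pow a N : (a`! * a.+1 ^ N <= (a + N)`!)%N.
Proof.
elim: N => [|N IH]; first by rewrite expn0 muln1 addn0.
rewrite addnS factS expnS mulnCA.
by apply: leq_mul => //; rewrite ltnS leq_addr.
Qed.

Lemma bin_mul3 n a b : (a <= b)%N -> (b <= n)%N ->
  ('C(n, b) * 'C(b, a) = 'C(n, a) * 'C(n - a, b - a))%N.
Proof.
move=> ab bn.
have P : (0 < a`! * (b - a)`! * (n - b)`!)%N by rewrite !muln_gt0 !fact_gt0.
apply/eqP; rewrite -(eqn_pmul2r P); apply/eqP.
have E2 : (n - a - (b - a) = n - b)%N by lia.
have F1 := bin_fact bn. have F2 := bin_fact ab.
have F3 : ('C(n - a, b - a) * ((b - a)`! * (n - b)`!) = (n - a)`!)%N.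
  by rewrite -E2 bin_fact //; lia.
have F4 := bin_fact (leq_trans ab bn).
transitivity (n`!).
  rewrite -F1 -F2; ring.
rewrite -F4 -F3; ring.
Qed.

Lemma fshE a b : (0 < a)%N -> (0 < b)%N -> fsh a b = (a`! * stirling2 b a)%N.
Proof. by case: a => // a; case: b. Qed.

Lemma sum_binpow N a :
  (\sum_(t < N) 'C(N, t.+1) * a ^ t.+1 = (a.+1) ^ N - 1)%N.
Proof.
have := expnDn 1 a N; rewrite add1n big_ord_recl /= bin0 exp1n expn0 !mul1n => ->.
rewrite addKn; apply: eq_bigr => i _; by rewrite exp1n mul1n.
Qed.

Lemma NU d a : (1 <= a)%N -> (a <= d)%N ->
  (\sum_(t < (d - a).+1) fsh a (a + 1 + t) * 'C(d.+1, a + 1 + t)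
     <= ((d.+1)`! - a`!) * 'C(d.+1, a))%N.
Proof.
move=> a1 ad.
set N := (d - a).+1.
have dN : d.+1 = (a + N)%N by rewrite /N addnS subnKC.
apply: (@leq_trans (\sum_(t < N) a`! * 'C(d.+1, a) * ('C(N, t.+1) * a ^ t.+1))).
  apply: leq_sum => t _.
  rewrite fshE // ?addn1 ?addSn //.
  have ab : (a <= (a + t).+1)%N by lia.
  have bn : ((a + t).+1 <= d.+1)%N by rewrite dN; have := ltn_ord t; lia.
  apply: (@leq_trans (a`! * ('C(d.+1, (a + t).+1) * ('C((a + t).+1, a) * a ^ ((a + t).+1 - a))))).
    rewrite -mulnA leq_mul2l; apply/orP; right.
    by rewrite mulnC leq_mul2l st_ub orbT.
  rewrite (mulnA 'C(d.+1, _)) bin_mul3 // -!mulnA leq_mul2l; apply/orP; right.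
  rewrite leq_mul2l; apply/orP; right.
  have -> : (d.+1 - a = N)%N by rewrite dN addKn.
  have -> : ((a + t).+1 - a = t.+1)%N by lia.
  by [].
rewrite -big_distrr /= sum_binpow.
rewrite mulnAC leq_mul2r; apply/orP; right.
have := fact_pow a N; rewrite -dN.
have : (1 <= a.+1 ^ N)%N by rewrite expn_gt0.
move: (a`!) (a.+1 ^ N)%N (d.+1`!) => x y z.
nia.
Qed.

Definition Afn n m := (m`! * stirling2 n m)%N.

Lemma A_rec n m : Afn n.+1 m = (m * (Afn n m + Afn n m.-1))%N.
Proof.
case: m => [|k]; first by rewrite /Afn /= !muln0.
rewrite /Afn /= factS; ring.
Qed.

Lemma A0m m : Afn 0 m.+1 = 0%N.
Proof. by rewrite /Afn /= muln0. Qed.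

Lemma Q_id n m : (\sum_(j < n.+1) 'C(n, j) * Afn (n - j) m = Afn n m + Afn n m.+1)%N.
Proof.
elim: n m => [|n IH] m.
  by rewrite big_ord1 bin0 mul1n subn0 A0m addn0.
rewrite big_ord_recl bin0 mul1n subn0.
under eq_bigr => i _ do rewrite lift0 binS subSS mulnDl.
rewrite big_split /= IH addnA.
have E : (Afn n.+1 m + \sum_(i < n.+1) 'C(n, i.+1) * Afn (n - i) m
          = \sum_(j < n.+1) 'C(n, j) * Afn (n - j).+1 m)%N.
  rewrite big_ord_recr /= bin_small // mul0n addn0.
  rewrite [in RHS]big_ord_recl bin0 mul1n subn0; congr (_ + _)%N.
  apply: eq_bigr => i _; rewrite lift0 subnSK //.
rewrite E; clear E.
under eq_bigr => j _ do rewrite A_rec mulnCA mulnDr.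
rewrite -big_distrr big_split /= IH.
case: m => [|k] /=.
  rewrite !A_rec /=; ring.
rewrite IH !A_rec /=; ring.
Qed.

Definition Fub n := (\sum_(m < n.+1) Afn n m)%N.

Lemma Fub_ext n M : (n < M)%N -> (\sum_(m < M) Afn n m = Fub n)%N.
Proof.
elim: M => // M IH; rewrite ltnS leq_eqVlt => /orP[/eqP <- //|nM].
by rewrite big_ord_recr /= IH // /Afn st_gt // muln0 addn0.
Qed.

Lemma Fub_rec n : (0 < n)%N ->
  (Fub n = \sum_(j < n) 'C(n, j.+1) * Fub (n - j.+1))%N.
Proof.
move=> n0.
have S1 : (\sum_(m < n.+2) \sum_(j < n.+1) 'C(n, j) * Afn (n - j) m
          = \sum_(j < n.+1) 'C(n, j) * Fub (n - j))%N.
  rewrite exchange_big /=; apply: eq_bigr => j _.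
  rewrite -big_distrr /= Fub_ext //; rewrite ltnS; apply: leq_trans (leq_subr _ _) _; by [].
have S2 : (\sum_(m < n.+2) \sum_(j < n.+1) 'C(n, j) * Afn (n - j) m
          = Fub n + Fub n)%N.
  under eq_bigr => m _ do rewrite Q_id.
  rewrite big_split /= Fub_ext //.
  have E : (\sum_(m < n.+2) Afn n m.+1 = Fub n)%N.
    rewrite -(Fub_ext n n.+3); last lia. rewrite [in RHS]big_ord_recl.
    under [in RHS] eq_bigr => i _ do rewrite lift0.
    by case: n n0 {S1} => // n _; rewrite /Afn /= muln0.
  by rewrite E.
move: S1; rewrite S2 big_ord_recl bin0 mul1n subn0 => S1.
have : (Fub n + Fub n = Fub n + \sum_(j < n) 'C(n, j.+1) * Fub (n - j.+1))%N.
  rewrite S1; congr (_ + _)%N; apply: eq_bigr => i _; by rewrite lift0.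
lia.
Qed.

Local Open Scope ring_scope.

Lemma Fseq_size d m : size (Fseq d m) = m.+1.
Proof. by elim: m => //= m ->. Qed.

Lemma Fseq_shift d m k t : (Fseq d (k + m))`_(k + t) = (Fseq d m)`_t.
Proof. by elim: k => //= k IH; rewrite addSn /= IH. Qed.

Lemma Fsh_top d : Fsh d.+1 d = 1.
Proof.
by rewrite /Fsh -[d.+1]addn0 Fseq_shift.
Qed.

Lemma Fsh_rec d a : (a <= d)%N ->
  Fsh a d = ((d.+1)`!%:R - (a`!)%:R)^-1 *
    \sum_(t < (d - a).+1) (fsh a (a + 1 + t))%:R * Fsh (a + 1 + t) d.
Proof.
move=> ad.
have E : d.+1 = (a + (d - a).+1)%N by rewrite addnS subnKC.
rewrite /Fsh {1}E; have := Fseq_shift d (d - a).+1 a 0; rewrite addn0 => -> /=; rewrite subKn // Fseq_size.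
congr (_ * _); apply: eq_bigr => t _; congr (_ * _).
have E2 : d.+1 = ((a + 1) + (d - a))%N by rewrite addn1 addSn subnKC.
by rewrite -(Fseq_shift d (d - a) (a + 1) t) -E2.
Qed.

Lemma sum4 (F : nat -> nat) n : (4 <= n)%N ->
  (F 0 + F 1 + F 2 + F 3 <= \sum_(j < n) F j)%N.
Proof.
move=> n4.
rewrite -(big_mkord xpredT) (big_cat_nat (leq0n 4) n4) /=.
apply: leq_trans (leq_addr _ _).
by rewrite big_mkord !big_ord_recl big_ord0 /= addn0 !addnA.
Qed.

Lemma binfactR n k : (k <= n)%N ->
  ('C(n, k)%:R * (n - k)`!%:R = n`!%:R / k`!%:R :> rat).
Proof.
move=> kn; rewrite -(bin_fact kn) !natrM.
have : (k`!%:R : rat) != 0 by rewrite pnatr_eq0 -lt0n fact_gt0.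
move=> h; by field.
Qed.

Definition aa : rat := 10 / 7.

Lemma term_lb n k : (k <= n)%N ->
  (n - k)`!%:R * (1/2) * aa ^+ (n - k) <= (Fub (n - k))%:R ->
  n`!%:R / k`!%:R * (1/2) * aa ^+ (n - k) <= ('C(n, k) * Fub (n - k))%:R :> rat.
Proof.
move=> kn I; rewrite natrM -(binfactR _ _ kn) -!mulrA ler_wpM2l ?ler0n //.
by move: I; rewrite !mulrA.
Qed.

Lemma fin4 (X Y f1 f2 f3 f4 : rat) : 0 <= X -> 0 <= Y ->
  X / 1 * (1/2) * (aa ^+ 3 * Y) <= f1 ->
  X / 2 * (1/2) * (aa ^+ 2 * Y) <= f2 ->
  X / 6 * (1/2) * (aa ^+ 1 * Y) <= f3 ->
  X / 24 * (1/2) * (aa ^+ 0 * Y) <= f4 ->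
  X * (1/2) * (aa ^+ 4 * Y) <= f1 + f2 + f3 + f4.
Proof.
move=> X0 Y0 h1 h2 h3 h4.
have XY : 0 <= X * Y by rewrite mulr_ge0.
move: h1 h2 h3 h4; rewrite /aa !exprS expr0 => h1 h2 h3 h4.
nra.
Qed.

Lemma Fub_lb n : (n`!%:R * (1/2) * aa ^+ n <= (Fub n)%:R :> rat).
Proof.
elim/ltn_ind: n => n IH.
case: (ltnP n 4) => [small|big].
  case: n IH small => [|[|[|[|m]]]] IH small; last by [].
  - rewrite /aa; have -> : Fub 0 = 1%N by rewrite /Fub /Afn !big_ord_recl big_ord0. rewrite ?factS fact0 ?natrM ?exprS expr0. lra.
  - rewrite /aa; have -> : Fub 1 = 1%N by rewrite /Fub /Afn !big_ord_recl big_ord0. rewrite ?factS fact0 ?natrM ?exprS expr0. lra.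
  - rewrite /aa; have -> : Fub 2 = 3%N by rewrite /Fub /Afn !big_ord_recl big_ord0. rewrite ?factS fact0 ?natrM ?exprS expr0. lra.
  - rewrite /aa; have -> : Fub 3 = 13%N by rewrite /Fub /Afn !big_ord_recl big_ord0. rewrite ?factS fact0 ?natrM ?exprS expr0. lra.
have H := sum4 (fun j => 'C(n, j.+1) * Fub (n - j.+1))%N n big.
move: H; rewrite -(ler_nat rat) => H.
rewrite Fub_rec; last by apply: leq_trans big.
apply: le_trans H; rewrite /= !natrD.
have L k : (0 < k)%N -> (k <= 4)%N -> (n - k < n)%N by lia.
have J1 := term_lb n 1 (leq_trans (isT : (1 <= 4)%N) big) (IH _ (L 1%N isT isT)).
have J2 := term_lb n 2 (leq_trans (isT : (2 <= 4)%N) big) (IH _ (L 2%N isT isT)).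
have J3 := term_lb n 3 (leq_trans (isT : (3 <= 4)%N) big) (IH _ (L 3%N isT isT)).
have J4 := term_lb n 4 big (IH _ (L 4%N isT isT)).
rewrite (_ : 1`! = 1)%N in J1; last by [].
rewrite (_ : 2`! = 2)%N in J2; last by [].
rewrite (_ : 3`! = 6)%N in J3; last by [].
rewrite (_ : 4`! = 24)%N in J4; last by [].
have E k : (k <= 4)%N -> aa ^+ (n - k) = aa ^+ (4 - k) * aa ^+ (n - 4).
  by move=> k4; rewrite -exprD; congr (_ ^+ _); lia.
have E0 : aa ^+ n = aa ^+ 4 * aa ^+ (n - 4).
  by rewrite -exprD; congr (_ ^+ _); lia.
rewrite (E 1%N isT) in J1; rewrite (E 2%N isT) in J2; rewrite (E 3%N isT) in J3; rewrite (E 4%N isT) in J4.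
rewrite E0; apply: fin4 J1 J2 J3 J4; first by rewrite ler0n.
by rewrite exprn_ge0 // /aa.
Qed.


Lemma coefXsub1_eq d : (('X - 1 : {poly rat}) ^+ d)`_d = 1.
Proof.
rewrite -polyC1.
have M := monic_exp d (monicXsubC (1:rat)).
by move/monicP: M; rewrite lead_coefE size_exp_XsubC /=.
Qed.

Lemma coefXsub1_lt k d : (k < d)%N -> (('X - 1 : {poly rat}) ^+ k)`_d = 0.
Proof. by move=> kd; rewrite -polyC1 nth_default // size_exp_XsubC. Qed.

Lemma Hcoef1 d : Fsh 0 d = 0 -> Hcoef 1 d = Fsh 1 d.
Proof.
move=> F0.
rewrite /Hcoef /Hpoly /Fpoly subn1 /= raddf_sum coef_sum.
rewrite big_ord_recl /= comp_polyZ comp_Xn_poly coefZ F0 mul0r add0r.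
rewrite big_ord_recl /= comp_polyZ comp_Xn_poly coefZ subn1 /= coefXsub1_eq mulr1.
rewrite big1 ?addr0 // => i _.
rewrite comp_polyZ comp_Xn_poly coefZ coefXsub1_lt ?mulr0 //.
rewrite /bump /= !add1n.
case: d i {F0} => [|d] i; first by case: i.
by rewrite !subSS; apply: leq_ltn_trans (leq_subr _ _) _.
Qed.

Lemma Fsh0 d : Fsh 0 d = 0.
Proof.
rewrite Fsh_rec // big1 ?mulr0 // => t _.
by rewrite add0n add1n /= mul0r.
Qed.

Lemma down_ind d (P : nat -> Prop) : P d.+1 ->
  (forall a, (a <= d)%N -> (forall b, (a < b)%N -> (b <= d.+1)%N -> P b) -> P a) ->
  forall a, (a <= d.+1)%N -> P a.
Proof.
move=> Ptop Hs.
suff: forall k a, (d.+1 - a <= k)%N -> (a <= d.+1)%N -> P a.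
  by move=> H a ad; apply: (H (d.+1 - a)%N).
elim=> [|k IH] a ka ad.
  by have -> : a = d.+1 by lia.
case: (ltnP a d.+1) => [lt|ge]; last by have -> : a = d.+1 by lia.
apply: Hs => // b ab bd; apply: IH => //; lia.
Qed.

Lemma den_pos d a : (1 <= d)%N -> (a <= d)%N -> 0 < (d.+1)`!%:R - (a`!)%:R :> rat.
Proof.
move=> d1 ad; rewrite subr_gt0 ltr_nat.
apply: leq_ltn_trans (leq_fact ad) _.
rewrite factS -[X in (X < _)%N]mul1n ltn_pmul2r ?fact_gt0 //.
Qed.

Section Bounds.
Variable d : nat.
Hypothesis d1 : (1 <= d)%N.

Lemma G_ge0 a : (a <= d.+1)%N -> 0 <= Fsh a d.
Proof.
move: a; apply: (down_ind d (fun a => 0 <= Fsh a d)) => [|a ad IH]; first by rewrite Fsh_top.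
rewrite Fsh_rec //; apply: mulr_ge0.
  by rewrite invr_ge0 ltW // den_pos.
apply: sumr_ge0 => t _; apply: mulr_ge0; first by rewrite ler0n.
apply: IH; first lia.
have := ltn_ord t; lia.
Qed.

Lemma G_ub a : (a <= d.+1)%N -> (1 <= a)%N -> Fsh a d <= ('C(d.+1, a))%:R.
Proof.
move: a; apply: (down_ind d (fun a => (1 <= a)%N -> Fsh a d <= ('C(d.+1, a))%:R)) => [|a ad IH] a1.
  by rewrite Fsh_top binn.
have dp := den_pos d a d1 ad.
rewrite Fsh_rec //.
apply: (@le_trans _ _ (((d.+1)`!%:R - (a`!)%:R)^-1 *
   (\sum_(t < (d - a).+1) fsh a (a + 1 + t) * 'C(d.+1, a + 1 + t))%:R)).
  rewrite ler_pM2l ?invr_gt0 // natr_sum; apply: ler_sum => t _.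
  rewrite natrM; apply: ler_wpM2l; first by rewrite ler0n.
  apply: IH; try lia.
  have := ltn_ord t; lia.
apply: (@le_trans _ _ (((d.+1)`!%:R - (a`!)%:R)^-1 *
   (((d.+1)`! - a`!) * 'C(d.+1, a))%:R)).
  by rewrite ler_pM2l ?invr_gt0 // ler_nat NU.
rewrite natrM natrB; last by apply: leq_trans (leq_fact ad) (leq_fact (leqnSn _)).
by rewrite mulrA mulVf ?mul1r // gt_eqF.
Qed.

Lemma fsh_top : fsh d.+1 d.+1 = (d.+1)`!.
Proof. by rewrite fshE // st_diag muln1. Qed.

Lemma G_lb a : (a <= d.+1)%N -> (fsh a d.+1)%:R / (d.+1)`!%:R <= Fsh a d.
Proof.
move=> ad1; case: (ltnP a d.+1) => [ad|da].
  have dp := den_pos d a d1 ad.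
  rewrite Fsh_rec // big_ord_recr /=.
  have -> : (a + 1 + (d - a))%N = d.+1 by lia.
  rewrite Fsh_top mulr1.
  apply: (@le_trans _ _ (((d.+1)`!%:R - (a`!)%:R)^-1 * (fsh a d.+1)%:R)).
    rewrite [X in _ <= X]mulrC; apply: ler_wpM2l; first by rewrite ler0n.
    rewrite lef_pV2 ?posrE ?ltr0n ?fact_gt0 //.
    by rewrite lerBlDr lerDl ler0n.
  rewrite ler_pM2l ?invr_gt0 // lerDr.
  apply: sumr_ge0 => t _; apply: mulr_ge0; first by rewrite ler0n.
  apply: G_ge0; have := ltn_ord t; lia.
have -> : a = d.+1 by lia.
by rewrite fsh_top Fsh_top divff // pnatr_eq0 -lt0n fact_gt0.
Qed.

End Bounds.

Lemma fin_up (S P D : rat) : 1 < D -> S * D <= P * (D - 1) -> (D - 1)^-1 * S <= P / D.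
Proof.
move=> D1 H.
have D0 : 0 < D - 1 by lra.
rewrite ler_pdivrMl // mulrA ler_pdivlMr; last lra.
lra.
Qed.

Lemma fin_lo (S Sg A D dd : rat) : 1 < D -> 0 < dd -> Sg / D <= S ->
  A * (D - 1) <= Sg * dd -> A / (D * dd) <= (D - 1)^-1 * S.
Proof.
move=> D1 dd0 H1 H2.
have D0 : 0 < D - 1 by lra.
have Dp : 0 < D by lra.
rewrite ler_pdivlMl //; apply: le_trans H1.
rewrite mulrA ler_pdivrMr ?mulr_gt0 //.
have -> : Sg / D * (D * dd) = Sg * dd by field; lra.
lra.
Qed.

Lemma pow2_fact n : (2 ^ n <= n.+1`!)%N.
Proof.
elim: n => // n IH; rewrite expnS factS.
by apply: leq_mul => //.
Qed.

Lemma twoD d : (2 * d <= (d.+1)`!)%N.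
Proof.
case: d => // d; rewrite !factS; have := fact_gt0 d; nia.
Qed.

Section Main.
Variable d : nat.
Hypothesis d1 : (1 <= d)%N.

Lemma G1_eq : Fsh 1 d = ((d.+1)`!%:R - 1)^-1 * \sum_(t < d) Fsh t.+2 d.
Proof.
rewrite Fsh_rec //.
have -> : (d - 1).+1 = d by lia.
congr (_ * _); apply: eq_bigr => t _.
rewrite fshE ?st_1 ?add1n ?add0n //= ?addn1 ?st_1.
by rewrite mul1r.
Qed.

Lemma NS : (\sum_(t < d) 'C(d.+1, t.+2) + d.+2 = 2 ^ d.+1)%N.
Proof.
have := sum_binpow d.+1 1; rewrite big_ord_recl bin1 exp1n muln1.
under eq_bigr => i _ do rewrite lift0 exp1n muln1.
have : (1 <= 2 ^ d.+1)%N by rewrite expn_gt0.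
set s := (\sum_(t < d) _)%N; lia.
Qed.

Lemma D2 : (2 <= (d.+1)`!)%N.
Proof. have := twoD d; lia. Qed.

Lemma upper : Fsh 1 d <= (2 ^ d.+1)%:R / (d.+1)`!%:R.
Proof.
rewrite G1_eq; apply: fin_up.
  by rewrite ltr1n; have := D2; lia.
set S := \sum_(t < d) Fsh t.+2 d.
set c := (\sum_(t < d) 'C(d.+1, t.+2))%:R : rat.
have Sc : S <= c.
  rewrite /S /c natr_sum; apply: ler_sum => t _; apply: G_ub => //.
  by have := ltn_ord t; lia.
have E : c + d%:R + 2 = (2 ^ d.+1)%:R :> rat.
  by rewrite -NS natrD -addrA -[(d.+2)%N]addn2 natrD.
have PF : ((2 ^ d.+1)%:R <= (d%:R + 2) * (d.+1)`!%:R :> rat).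
  have := pow2_fact d.+1; rewrite -(ler_nat rat) factS natrM => h.
  by apply: le_trans h _; rewrite -[(d.+2)%N]addn2 natrD.
have DD : (2 <= (d.+1)`!%:R :> rat) by rewrite -[2]/(2%:R) ler_nat D2.
move: Sc E PF DD.
move: ((d.+1)`!%:R : rat) ((2 ^ d.+1)%:R : rat) (d%:R : rat) => D P dd.
move=> Sc E PF DD.
have h1 : S * D <= c * D by apply: ler_wpM2r => //; lra.
have h2 : c * D = (P - dd - 2) * D by rewrite -E; ring.
nra.
Qed.

Lemma FubE : (Fub d.+1 = 1 + \sum_(t < d) Afn d.+1 t.+2)%N.
Proof.
rewrite /Fub !big_ord_recl /=.
have -> : Afn d.+1 0 = 0%N by rewrite /Afn /= muln0.
rewrite /bump /= add0n.
have -> : Afn d.+1 1 = 1%N by rewrite /Afn st_1.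
by congr (_ + _)%N; apply: eq_bigr => i _; rewrite !add1n.
Qed.

Lemma lower : aa ^+ d / ((d.+1)`!%:R * d%:R) <= Fsh 1 d.
Proof.
set Sg := (\sum_(t < d) Afn d.+1 t.+2)%N.
rewrite G1_eq; apply: (@fin_lo _ (Sg%:R)).
- by rewrite ltr1n; have := D2; lia.
- by rewrite ltr0n.
- rewrite /Sg natr_sum mulr_suml; apply: ler_sum => t _.
  have := @G_lb d d1 t.+2; rewrite fshE //; apply.
  by have := ltn_ord t; lia.
have FE := FubE; rewrite -/Sg in FE.
case: (ltnP d 2) => [dlt|dge].
  have d1' : d = 1%N by lia.
  move: FE; rewrite d1' => FE.
  have : Fub 2 = 3%N by rewrite /Fub /Afn !big_ord_recl big_ord0.
  rewrite FE => /eqP; rewrite eqSS => /eqP ->.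
  rewrite /aa expr1.
  have -> : (2`!%:R : rat) = 2 by [].
  lra.
have FL := Fub_lb d.+1; rewrite FE natrD exprS in FL.
have DD : (2 * d%:R <= (d.+1)`!%:R :> rat).
  by rewrite -[2]/(2%:R) -natrM ler_nat twoD.
have dd2 : (2 <= d%:R :> rat) by rewrite -[2]/(2%:R) ler_nat.
have Y0 : (100/49 <= aa ^+ d).
  have -> : aa ^+ d = aa ^+ 2 * aa ^+ (d - 2) by rewrite -exprD subnKC.
  have : 1 <= aa ^+ (d - 2) by rewrite exprn_ege1 // /aa; lra.
  rewrite /aa expr2; nra.
have S0 : (0 <= Sg%:R :> rat) by rewrite ler0n.
move: FL DD dd2 Y0 S0.
move: ((d.+1)`!%:R : rat) (d%:R : rat) (aa ^+ d) (Sg%:R : rat) => D dd Y S.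
rewrite /aa => FL DD dd2 Y0 S0.
have h3 : S * 2 <= S * dd by apply: ler_wpM2l.
have h4 : 4 * Y <= D * Y by apply: ler_wpM2r; lra.
lra.
Qed.
End Main.

Theorem proposition2p13 (R : rcfType) (d : nat) (hd : (1 <= d)%N) :
  Num.sqrt (2 : R) ^+ d / ((d.+1)`!%:R * d%:R) <= ratr (Hcoef 1 d)
  /\ ratr (Hcoef 1 d) <= (2 : R) ^+ d.+1 / (d.+1)`!%:R.
Proof.
rewrite (Hcoef1 d (Fsh0 d)); split.
- apply: (@le_trans _ _ (ratr (aa ^+ d / ((d.+1)`!%:R * d%:R)))); last first.
    by rewrite ler_rat; apply: lower.
  rewrite rmorphM /= fmorphV rmorphM /= !ratr_nat rmorphXn /=.
  apply: ler_wpM2r; first by rewrite invr_ge0 mulr_ge0 ?ler0n.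
  have -> : ratr aa = 10 / 7 :> R.
    by rewrite /aa rmorphM /= fmorphV /= !ratr_nat.
  rewrite (ler_pXn2r hd) ?nnegrE ?sqrtr_ge0 //; last by lra.
  have s2 : Num.sqrt (2 : R) ^+ 2 = 2 by rewrite sqr_sqrtr // ler0n.
  have s0 : 0 <= Num.sqrt (2 : R) by apply: sqrtr_ge0.
  move: s2 s0; move: (Num.sqrt (2 : R)) => x; rewrite expr2 => s2 s0.
  nra.
- apply: (@le_trans _ _ (ratr ((2 ^ d.+1)%:R / (d.+1)`!%:R))).
    by rewrite ler_rat; apply: upper.
  by rewrite rmorphM /= fmorphV /= !ratr_nat natrX.
Qed.
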